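(* Let $X_1,X_2$ be connected graphs, each with at least two vertices, $X=X_1\square X_2$, and let $F_{-2}$ be the orthogonal projection onto the $(-2)$-eigenspace of the adjacency matrix of $\mathcal L(X)$. Let $\varepsilon_1\neq\varepsilon_2$ be edges of $X$. Then $F_{-2}\mathbf h_{\varepsilon_1}=\pm F_{-2}\mathbf h_{\varepsilon_2}$ (for some sign) if and only if, up to interchanging the roles of $X_1$ and $X_2$ and of $\varepsilon_1,\varepsilon_2$, one of the following holds: (i) $X_2=K_2$ with $V(X_2)=\{1,2\}$, and there is an edge $\{a,b\}$ of $X_1$ with $-2\notin\Lambda_{\mathbf f_{ab}}$ such that $\varepsilon_1$ joins $(a,1)$ and $(b,1)$ and $\varepsilon_2$ joins $(a,2)$ and $(b,2)$; (ii) there are a pendant vertex $a$ of $X_1$ with its edge $\{a,b\}\in E(X_1)$ and a pendant vertex $\alpha$ of $X_2$ with its edge $\{\alpha,\beta\}\in E(X_2)$, with $-2\notin\Lambda_{\mathbf f_{ab}}$ and $-2\notin\Lambda_{\mathbf f_{\alpha\beta}}$, such that $\varepsilon_1$ joins $(a,\alpha)$ and $(a,\beta)$ and $\varepsilon_2$ joins $(a,\alpha)$ and $(b,\alpha)$. Moreover, in case (i) $F_{-2}\mathbf h_{\varepsilon_1}=F_{-2}\mathbf h_{\varepsilon_2}\ne\mathbf 0$, and in case (ii) $F_{-2}\mathbf h_{\varepsilon_1}=-F_{-2}\mathbf h_{\varepsilon_2}\neq\mathbf 0$.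
   Context: $X_1\square X_2$ is the Cartesian product: vertex set $V(X_1)\times V(X_2)$, with $(x,y)\sim(x',y')$ iff ($x=x'$ and $y\sim y'$) or ($y=y'$ and $x\sim x'$). The line graph $\mathcal L(Y)$ has vertex set $E(Y)$, edges adjacent iff they share an endpoint. For an edge $\varepsilon$ of $X$, $\mathbf h_\varepsilon$ is the standard basis vector of the corresponding vertex of $\mathcal L(X)$. For $\{a,b\}\in E(X_j)$, $\mathbf f_{ab}$ is the vertex state of $\mathcal L(X_j)$ and $\Lambda_{\mathbf f_{ab}}$ its eigenvalue support with respect to the adjacency matrix of $\mathcal L(X_j)$ (set of eigenvalues $\theta$ whose spectral projection does not annihilate $\mathbf f_{ab}$). A pendant vertex is a vertex of degree one. *)

(* Defs.v *)
From HB Require Import structures.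
From mathcomp Require Import all_boot all_order all_algebra.
From mathcomp Require Import reals.
Set Implicit Arguments. Unset Strict Implicit. Unset Printing Implicit Defensive.
Import Order.TTheory GRing.Theory Num.Theory.
Local Open Scope ring_scope.

(* A finite simple graph is a symmetric irreflexive relation g on a finType. *)
Definition connectedg (T : finType) (g : rel T) : Prop := forall x y, connect g x y.

Definition deg (T : finType) (g : rel T) (x : T) : nat := #|[set y | g x y]|.
Definition pendant (T : finType) (g : rel T) (x : T) : bool := deg g x == 1%N.

Definition is_edgeb (T : finType) (g : rel T) (e : {set T}) : bool :=
  [exists x, exists y, g x y && (e == [set x; y])].
Definition edge_of (T : finType) (g : rel T) := {e : {set T} | is_edgeb g e}.

Definition cart_adj (T1 T2 : finType) (g1 : rel T1) (g2 : rel T2) : rel (T1 * T2) :=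
  fun u v => ((u.1 == v.1) && g2 u.2 v.2) || ((u.2 == v.2) && g1 u.1 v.1).

Definition line_adj (T : finType) (g : rel T) : rel (edge_of g) :=
  fun e f => (e != f) && [exists x, (x \in val e) && (x \in val f)].
Arguments line_adj {T} g.

Definition adjmx (R : realType) (V : finType) (r : rel V) : 'M[R]_#|V| :=
  \matrix_(i, j) (r (enum_val i) (enum_val j))%:R.

Definition vstate (R : realType) (V : finType) (v : V) : 'rV[R]_#|V| :=
  delta_mx 0 (enum_rank v).

(* orthogonal projection onto the row space of W (acting on row vectors by v *m P):
   P = B^T (B B^T)^{-1} B with B a basis of the row space of W *)
Definition orthproj (R : realType) (n : nat) (W : 'M[R]_n) : 'M[R]_n :=
  let B := row_base W in B^T *m invmx (B *m B^T) *m B.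

Definition eigproj (R : realType) (n : nat) (A : 'M[R]_n) (theta : R) : 'M[R]_n :=
  orthproj (eigenspace A theta).

Definition in_eig_support (R : realType) (n : nat) (A : 'M[R]_n) (v : 'rV[R]_n) (theta : R) : bool :=
  eigenvalue A theta && (v *m eigproj A theta != 0).

Definition Fm2 (R : realType) (T : finType) (g : rel T) (e : edge_of g) : 'rV[R]_#|{: edge_of g}| :=
  vstate R e *m eigproj (adjmx R (line_adj g)) (-2).

Definition m2_notin_supp (R : realType) (T : finType) (g : rel T) (e : edge_of g) : bool :=
  ~~ in_eig_support (adjmx R (line_adj g)) (vstate R e) (-2).

Definition case_i (R : realType) (T1 T2 : finType) (g1 : rel T1) (g2 : rel T2)
  (e1 e2 : edge_of (cart_adj g1 g2)) : Prop :=
  #|T2| = 2%N /\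
  exists (p q : T2) (a b : T1) (f : edge_of g1),
    [/\ p != q, val f = [set a; b], m2_notin_supp R f,
        val e1 = [set (a, p); (b, p)] & val e2 = [set (a, q); (b, q)]].

Definition case_i' (R : realType) (T1 T2 : finType) (g1 : rel T1) (g2 : rel T2)
  (e1 e2 : edge_of (cart_adj g1 g2)) : Prop :=
  #|T1| = 2%N /\
  exists (p q : T1) (a b : T2) (f : edge_of g2),
    [/\ p != q, val f = [set a; b], m2_notin_supp R f,
        val e1 = [set (p, a); (p, b)] & val e2 = [set (q, a); (q, b)]].

Definition case_ii (R : realType) (T1 T2 : finType) (g1 : rel T1) (g2 : rel T2)
  (e1 e2 : edge_of (cart_adj g1 g2)) : Prop :=
  exists (a b : T1) (al be : T2) (f1 : edge_of g1) (f2 : edge_of g2),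
    [/\ pendant g1 a /\ pendant g2 al, val f1 = [set a; b], val f2 = [set al; be],
        m2_notin_supp R f1 /\ m2_notin_supp R f2 &
        val e1 = [set (a, al); (a, be)] /\ val e2 = [set (a, al); (b, al)]].

Definition case_ii' (R : realType) (T1 T2 : finType) (g1 : rel T1) (g2 : rel T2)
  (e1 e2 : edge_of (cart_adj g1 g2)) : Prop :=
  exists (a b : T2) (al be : T1) (f1 : edge_of g2) (f2 : edge_of g1),
    [/\ pendant g2 a /\ pendant g1 al, val f1 = [set a; b], val f2 = [set al; be],
        m2_notin_supp R f1 /\ m2_notin_supp R f2 &
        val e1 = [set (al, a); (be, a)] /\ val e2 = [set (al, a); (al, b)]].

Definition case_i_sym R T1 T2 g1 g2 (e1 e2 : edge_of (@cart_adj T1 T2 g1 g2)) : Prop :=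
  case_i R e1 e2 \/ case_i R e2 e1 \/ case_i' R e1 e2 \/ case_i' R e2 e1.
Definition case_ii_sym R T1 T2 g1 g2 (e1 e2 : edge_of (@cart_adj T1 T2 g1 g2)) : Prop :=
  case_ii R e1 e2 \/ case_ii R e2 e1 \/ case_ii' R e1 e2 \/ case_ii' R e2 e1.

(* Main.v *)
Require Import Defs.
From HB Require Import structures.
From mathcomp Require Import all_boot all_order all_algebra.
From mathcomp Require Import reals.
From mathcomp Require Import ring lra.
Set Implicit Arguments. Unset Strict Implicit. Unset Printing Implicit Defensive.
Import Order.TTheory GRing.Theory Num.Theory.
Local Open Scope ring_scope.

Lemma mxtrmx_eq0 (R : realType) m n (X : 'M[R]_(m, n)) : X *m X^T = 0 -> X = 0.
Proof.
move=> H; apply/matrixP => i j; rewrite mxE.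
have := congr1 (fun M : 'M_m => M i i) H; rewrite !mxE.
under eq_bigr do rewrite mxE.
move/eqP; rewrite psumr_eq0; last by move=> k _; rewrite -expr2 sqr_ge0.
by move/allP/(_ j (mem_index_enum _)); rewrite /= -expr2 sqrf_eq0 => /eqP.
Qed.

Lemma projP (R : realType) n (M : 'M[R]_n) (v : 'rV[R]_n) :
  v *m orthproj (kermx M) = 0 <->
  (forall w : 'rV[R]_n, w *m M = 0 -> \sum_i v 0 i * w 0 i = 0).
Proof.
rewrite /orthproj; set B := row_base (kermx M).
have eB : (B :=: kermx M)%MS by exact: eq_row_base.
have fB : row_free B by exact: row_base_free.
clearbody B.
have CU : B *m B^T \in unitmx.
  rewrite -row_free_unit -kermx_eq0; apply/eqP.
  set K := kermx (B *m B^T).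
  have : (K *m B) *m (K *m B)^T = 0.
    by rewrite trmx_mul mulmxA -(mulmxA K) mulmx_ker mul0mx.
  move/mxtrmx_eq0/eqP; rewrite mulmx_free_eq0 //.
  by move/eqP.
have key : v *m (B^T *m invmx (B *m B^T) *m B) = 0 <-> v *m B^T = 0.
  split=> H; last by rewrite !mulmxA H !mul0mx.
  have := congr1 (mulmx^~ B^T) H.
  by rewrite mul0mx -!mulmxA mulVmx // mulmx1.
rewrite key; split.
- move=> H w wM.
  have : (w <= B)%MS by rewrite eB sub_kermx wM.
  move/mulmxKpV => <-.
  have -> : \sum_i v 0 i * (w *m pinvmx B *m B) 0 i
      = (v *m (w *m pinvmx B *m B)^T) 0 0.
    by rewrite !mxE; apply: eq_bigr => i _; rewrite !mxE.
  by rewrite trmx_mul mulmxA H mul0mx mxE.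
- move=> H; apply/rowP => i; rewrite [RHS]mxE mxE.
  have := H (row i B).
  have -> : row i B *m M = 0.
    apply/eqP; rewrite -sub_kermx; apply: submx_trans (row_sub i B) _.
    by rewrite eB.
  move/(_ erefl) => E; apply: etrans E; apply: eq_bigr => j _; rewrite !mxE //.
Qed.

Definition Sv (R : realType) (T : finType) (g : rel T) (k : edge_of g -> R) (u : T) : R :=
  \sum_(f : edge_of g | u \in val f) k f.
Definition kern (R : realType) (T : finType) (g : rel T) (k : edge_of g -> R) :=
  forall u, Sv k u = 0.

Lemma edgeP (T : finType) (g : rel T) (e : edge_of g) :
  exists x y, g x y /\ val e = [set x; y].
Proof.
case: e => s /= /existsP [x /existsP [y /andP [gxy /eqP ->]]].
by exists x, y.
Qed.

Lemma edge_card (T : finType) (g : rel T) (irr : irreflexive g) (e : edge_of g) :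
  #|val e| = 2%N.
Proof.
have [x [y [gxy ->]]] := edgeP e.
rewrite cards2; case: eqP gxy => // ->; by rewrite irr.
Qed.

Lemma edge_meet (T : finType) (g : rel T) (irr : irreflexive g) (e f : edge_of g) :
  f != e -> (#|val e :&: val f| <= 1)%N.
Proof.
move=> nfe; rewrite leqNgt; apply/negP => H.
have c2 : forall h : edge_of g, val e :&: val f \subset val h -> val h = val e :&: val f.
  move=> h sub; apply/eqP; rewrite eq_sym eqEcard sub edge_card //.
have E1 := c2 e (subsetIl _ _). have E2 := c2 f (subsetIr _ _).
by move: nfe; rewrite -(inj_eq val_inj) E2 -E1 eqxx.
Qed.

Lemma natr_cardI (R : realType) (T : finType) (A B : {set T}) :
  \sum_(u in A) ((u \in B)%:R : R) = (#|A :&: B|)%:R.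
Proof.
rewrite -sum1_card natr_sum big_mkcond [RHS]big_mkcond /=.
by apply: eq_bigr => u _; rewrite inE; case: (u \in A); case: (u \in B).
Qed.

Lemma adj_entry (R : realType) (T : finType) (g : rel T) (irr : irreflexive g) (f e : edge_of g) :
  ((line_adj g f e)%:R + (f == e)%:R * 2 : R) = \sum_(u in val e) (u \in val f)%:R.
Proof.
rewrite natr_cardI.
case: (f =P e) => [-> | /eqP nfe].
  by rewrite /line_adj eqxx /= setIid edge_card // mul1r add0r.
rewrite mul0r addr0 /line_adj nfe /=; congr (_%:R).
have := edge_meet irr nfe.
case: existsP => [[x /andP [xf xe]] | nex].
  have : (0 < #|val e :&: val f|)%N by rewrite card_gt0; apply/set0Pn; exists x; rewrite inE xe.
  by case: #|_| => [|[|]].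
have : #|val e :&: val f| = 0%N.
  apply/eqP; rewrite cards_eq0; apply/eqP/setP => x; rewrite !inE.
  by apply/negP => /andP [xe xf]; apply: nex; exists x; rewrite xe xf.
by move=> ->.
Qed.

Definition rowk (R : realType) (T : finType) (g : rel T) (k : edge_of g -> R) : 'rV[R]_#|{: edge_of g}| :=
  \row_i k (enum_val i).

Lemma sum_ord_edge (R : realType) (T : finType) (g : rel T) (F : 'I_#|{: edge_of g}| -> R) :
  \sum_i F i = \sum_(f : edge_of g) F (enum_rank f).
Proof.
rewrite (reindex (@enum_rank _)) //.
by exists enum_val => x _; rewrite ?enum_rankK ?enum_valK.
Qed.

Lemma kern_entry (R : realType) (T : finType) (g : rel T) (irr : irreflexive g)
  (k : edge_of g -> R) (e : edge_of g) :
  (rowk k *m (adjmx R (line_adj g) - (-2)%:M)) 0 (enum_rank e) = \sum_(u in val e) Sv k u.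
Proof.
rewrite mxE sum_ord_edge.
under eq_bigr => f _ do rewrite !mxE !enum_rankK (inj_eq enum_rank_inj) mulNrn opprK.
have -> : \sum_(f : edge_of g) k f * ((line_adj g f e)%:R + 2 *+ (f == e))
   = \sum_(f : edge_of g) k f * \sum_(u in val e) (u \in val f)%:R.
  apply: eq_bigr => f _; rewrite -adj_entry //; congr (_ * (_ + _)).
  by case: (f == e); rewrite ?mul1r ?mul0r.
under eq_bigr do rewrite mulr_sumr.
rewrite exchange_big /=; apply: eq_big => // u _.
rewrite /Sv [RHS]big_mkcond /=; apply: eq_bigr => f _.
by case: (u \in val f); rewrite ?mulr1 ?mulr0.
Qed.

Lemma kernP (R : realType) (T : finType) (g : rel T) (irr : irreflexive g)
  (k : edge_of g -> R) :
  rowk k *m (adjmx R (line_adj g) - (-2)%:M) = 0 <-> kern k.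
Proof.
split=> [H | H]; last first.
  apply/rowP => j; rewrite [RHS]mxE -(enum_valK j) kern_entry //.
  by apply: big1 => u _; apply: H.
have He : forall e : edge_of g, \sum_(u in val e) Sv k u = 0.
  by move=> e; rewrite -kern_entry // H mxE.
have : \sum_u Sv k u ^+ 2 = 0.
  transitivity (\sum_(f : edge_of g) k f * \sum_(u in val f) Sv k u); last first.
    by apply: big1 => f _; rewrite He mulr0.
  transitivity (\sum_u \sum_(f : edge_of g) (u \in val f)%:R * (k f * Sv k u)).
    apply: eq_bigr => u _; rewrite expr2 {1}/Sv big_distrl [LHS]big_mkcond /=.
    by apply: eq_bigr => f _; case: (u \in val f); rewrite ?mul1r ?mul0r.
  rewrite exchange_big /=; apply: eq_bigr => f _; rewrite mulr_sumr [RHS]big_mkcond /=.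
  by apply: eq_big => // u _; case: (u \in val f); rewrite ?mul1r ?mul0r ?mulr0.
move/eqP; rewrite psumr_eq0; last by move=> u _; rewrite sqr_ge0.
move/allP => Hall u; have := Hall u (mem_index_enum _).
by rewrite /= sqrf_eq0 => /eqP.
Qed.

Lemma dot_vstate (R : realType) (T : finType) (g : rel T) (e : edge_of g)
  (w : 'rV[R]_#|{: edge_of g}|) :
  \sum_i (vstate R e) 0 i * w 0 i = w 0 (enum_rank e).
Proof.
rewrite (bigD1 (enum_rank e)) //= big1 ?addr0.
  by rewrite /vstate mxE !eqxx mul1r.
by move=> i /negPf ne; rewrite /vstate mxE ne andbF mul0r.
Qed.

Lemma rowkK (R : realType) (T : finType) (g : rel T) (w : 'rV[R]_#|{: edge_of g}|) :
  rowk (fun f => w 0 (enum_rank f)) = w.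
Proof. by apply/rowP => i; rewrite mxE enum_valK. Qed.

Lemma rowkE (R : realType) (T : finType) (g : rel T) (k : edge_of g -> R) f :
  rowk k 0 (enum_rank f) = k f.
Proof. by rewrite mxE enum_rankK. Qed.

Lemma dotB (R : realType) n (v1 v2 w : 'rV[R]_n) (c : R) :
  \sum_i (v1 - c *: v2) 0 i * w 0 i = \sum_i v1 0 i * w 0 i - c * \sum_i v2 0 i * w 0 i.
Proof.
rewrite mulr_sumr -sumrB; apply: eq_bigr => i _.
by rewrite !mxE mulrBl mulrA.
Qed.

Lemma Fm2_rel (R : realType) (T : finType) (g : rel T) (irr : irreflexive g)
  (e1 e2 : edge_of g) (c : R) :
  Fm2 R e1 = c *: Fm2 R e2 <-> (forall k, kern k -> k e1 = c * k e2).
Proof.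
have -> : (Fm2 R e1 = c *: Fm2 R e2) <->
    ((vstate R e1 - c *: vstate R e2) *m eigproj (adjmx R (line_adj g)) (-2) = 0).
  rewrite /Fm2 mulmxBl -scalemxAl; split=> [-> | /eqP]; first by rewrite subrr.
  by rewrite subr_eq0 => /eqP.
rewrite /eigproj /eigenspace projP; split.
- move=> H k kk; have := H (rowk k) (proj2 (kernP irr k) kk).
  rewrite dotB !dot_vstate !rowkE => /eqP.
  by rewrite subr_eq0 => /eqP.
- move=> H w wM.
  rewrite dotB !dot_vstate; apply/eqP; rewrite subr_eq0; apply/eqP.
  apply: (H (fun f => w 0 (enum_rank f))); apply/(kernP irr); by rewrite rowkK.
Qed.

Lemma Fm2_nz (R : realType) (T : finType) (g : rel T) (irr : irreflexive g)
  (e : edge_of g) (k : edge_of g -> R) : kern k -> k e != 0 -> Fm2 R e != 0.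
Proof.
move=> kk ke; apply/eqP => H.
have : Fm2 R e = 0 *: Fm2 R e by rewrite H scaler0.
move/(Fm2_rel irr) => /(_ k kk); rewrite mul0r => /eqP; by rewrite (negbTE ke).
Qed.

Lemma m2P (R : realType) (T : finType) (g : rel T) (irr : irreflexive g) (f : edge_of g) :
  m2_notin_supp R f <-> (forall k : edge_of g -> R, kern k -> k f = 0).
Proof.
rewrite /m2_notin_supp /in_eig_support /eigproj /eigenspace negb_and negbK.
split.
- case/orP => [K0 | /eqP H] k kk.
    move: K0; rewrite /eigenvalue /eigenspace negbK => /eqP K0.
    have := proj2 (kernP irr k) kk => /eqP; rewrite -sub_kermx K0 submx0 => /eqP wk.
    by rewrite -(rowkE k) wk mxE.
  move/projP: H => /(_ (rowk k) (proj2 (kernP irr k) kk)).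
  by rewrite dot_vstate rowkE.
- move=> H; apply/orP; right; apply/eqP/projP => w wM.
  rewrite dot_vstate; apply: (H (fun f => w 0 (enum_rank f))).
  by apply/(kernP irr); rewrite rowkK.
Qed.

Definition ks (R : realType) (T : finType) (g : rel T) (I : Type) (r : seq I)
  (c : I -> R) (s : I -> {set T}) (f : edge_of g) : R :=
  \sum_(i <- r) c i * (val f == s i)%:R.

Lemma one_edge (R : realType) (T : finType) (g : rel T) (s : {set T}) (hs : is_edgeb g s) u :
  \sum_(f : edge_of g | u \in val f) ((val f == s)%:R : R) = (u \in s)%:R.
Proof.
pose f0 : edge_of g := exist _ s hs.
have E : forall f : edge_of g, (val f == s) = (f == f0).
  by move=> f; rewrite -(inj_eq val_inj).
under eq_bigr do rewrite E.
case us : (u \in s).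
  rewrite (bigD1 f0) //= eqxx big1 ?addr0 // => f /andP [_ /negPf ->] //.
by rewrite big1 // => f uf; case: eqP uf => // ->; rewrite /= us.
Qed.

Lemma ks_S (R : realType) (T : finType) (g : rel T) (I : eqType) (r : seq I)
  (c : I -> R) (s : I -> {set T}) :
  (forall i, i \in r -> is_edgeb g (s i)) ->
  forall u, Sv (ks (g:=g) r c s) u = \sum_(i <- r) c i * (u \in s i)%:R.
Proof.
move=> Hs u; rewrite /Sv /ks exchange_big /= big_seq [RHS]big_seq.
apply: eq_bigr => i ir; rewrite -mulr_sumr one_edge //; exact: Hs.
Qed.

Lemma kat_val (R : realType) (T : finType) (g : rel T) (k : edge_of g -> R) (e : edge_of g) :
  \sum_(f : edge_of g) k f * (val f == val e)%:R = k e.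
Proof.
rewrite (bigD1 e) //= eqxx mulr1 big1 ?addr0 // => f /negPf ne.
by rewrite (inj_eq val_inj) ne mulr0.
Qed.

Lemma mem2R (R : realType) (T : finType) (x y u : T) : x != y ->
  ((u \in [set x; y])%:R : R) = (u == x)%:R + (u == y)%:R.
Proof.
move=> xy; rewrite !inE; case: (u =P x) => [-> | _] /=; last by rewrite add0r.
by rewrite (negbTE xy) addr0.
Qed.

Lemma set2_neq (T : finType) (x y z t : T) : z \notin [set x; y] -> [set x; y] != [set z; t].
Proof. by move=> H; apply/eqP => E; move: H; rewrite E !inE eqxx. Qed.

Lemma set_neq_w (T : finType) (A B : {set T}) z : z \notin A -> z \in B -> A != B.
Proof. by move=> H1 H2; apply/eqP => E; move: H1; rewrite E H2. Qed.

Lemma irr_neq (T : finType) (g : rel T) (irr : irreflexive g) x y : g x y -> x != y.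
Proof. by move=> gxy; apply/eqP => E; move: gxy; rewrite E irr. Qed.

Definition sqlist (R : realType) (T : finType) (w1 w2 w3 w4 : T) : seq (R * {set T}) :=
  [:: (1, [set w1; w2]); (-1, [set w2; w3]); (1, [set w3; w4]); (-1, [set w4; w1])].

Lemma edge_is (T : finType) (g : rel T) x y : g x y -> is_edgeb g [set x; y].
Proof. by move=> gxy; apply/existsP; exists x; apply/existsP; exists y; rewrite gxy eqxx. Qed.

Lemma sq_main (R : realType) (T : finType) (g : rel T) (irr : irreflexive g)
  (w1 w2 w3 w4 : T) :
  g w1 w2 -> g w2 w3 -> g w3 w4 -> g w4 w1 -> w1 != w3 -> w2 != w4 ->
  forall e1 : edge_of g, val e1 = [set w1; w2] ->
  exists k : edge_of g -> R, [/\ kern k, k e1 = 1 &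
    forall e2, e2 != e1 -> k e2 = if val e2 == [set w2; w3] then -1
                        else if val e2 == [set w3; w4] then 1
                        else if val e2 == [set w4; w1] then -1 else 0].
Proof.
move=> g12 g23 g34 g41 n13 n24 e1 E1.
have n12 := irr_neq irr g12; have n23 := irr_neq irr g23.
have n34 := irr_neq irr g34; have n41 := irr_neq irr g41.
have d12 : [set w1; w2] != [set w2; w3].
  by apply: (set_neq_w (z := w3)); rewrite !inE ?eqxx ?orbT // negb_or eq_sym n13 eq_sym n23.
have d13 : [set w1; w2] != [set w3; w4].
  by apply: (set_neq_w (z := w3)); rewrite !inE ?eqxx ?orbT // negb_or eq_sym n13 eq_sym n23.
have d14 : [set w1; w2] != [set w4; w1].
  by apply: (set_neq_w (z := w4)); rewrite !inE ?eqxx ?orbT // negb_or n41 eq_sym n24.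
have d23 : [set w2; w3] != [set w3; w4].
  by apply: (set_neq_w (z := w4)); rewrite !inE ?eqxx ?orbT // negb_or eq_sym n24 eq_sym n34.
have d24 : [set w2; w3] != [set w4; w1].
  by apply: (set_neq_w (z := w4)); rewrite !inE ?eqxx ?orbT // negb_or eq_sym n24 eq_sym n34.
have d34 : [set w3; w4] != [set w4; w1].
  by apply: (set_neq_w (z := w1)); rewrite !inE ?eqxx ?orbT // negb_or n13 eq_sym n41.
exists (ks (sqlist R w1 w2 w3 w4) fst snd); split.
- move=> u; rewrite ks_S; last first.
    by move=> i; rewrite !inE => /or4P [] /eqP -> /=; apply: edge_is.
  rewrite /sqlist !big_cons big_nil /= !mem2R // 1?eq_sym //.
  ring.
- rewrite /ks /sqlist !big_cons big_nil /= E1 eqxx (negbTE d12) (negbTE d13) (negbTE d14).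
  by rewrite /=; ring.
- move=> e2 ne; rewrite /ks /sqlist !big_cons big_nil /=.
  have -> : (val e2 == [set w1; w2]) = false.
    by apply/negbTE; rewrite -E1 (inj_eq val_inj).
  case: (val e2 =P [set w2; w3]) => [-> | _].
    by rewrite (negbTE d23) (negbTE d24) /=; ring.
  case: (val e2 =P [set w3; w4]) => [-> | _].
    by rewrite (negbTE d34) /=; ring.
  case: (val e2 =P [set w4; w1]) => [_ | _].
    by rewrite /=; ring.
  by rewrite /=; ring.
Qed.

Definition Qs (R : realType) (T : finType) (g : rel T) (e1 e2 : edge_of g) (s : R) :=
  forall k : edge_of g -> R, kern k -> k e1 = s * k e2.

Lemma sq_Q (R : realType) (T : finType) (g : rel T) (irr : irreflexive g)
  (w1 w2 w3 w4 : T) :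
  g w1 w2 -> g w2 w3 -> g w3 w4 -> g w4 w1 -> w1 != w3 -> w2 != w4 ->
  forall (e1 e2 : edge_of g) (s : R), val e1 = [set w1; w2] -> e2 != e1 -> Qs e1 e2 s ->
  (val e2 = [set w2; w3] /\ s = -1) \/ (val e2 = [set w3; w4] /\ s = 1) \/
  (val e2 = [set w4; w1] /\ s = -1).
Proof.
move=> g12 g23 g34 g41 n13 n24 e1 e2 s E1 ne Q.
have [k [kk k1 k2]] := sq_main R irr g12 g23 g34 g41 n13 n24 E1.
have := Q k kk; rewrite k1 (k2 e2 ne).
case: (val e2 =P _) => [-> H | _]; first by left; split => //; lra.
case: (val e2 =P _) => [-> H | _]; first by right; left; split => //; lra.
case: (val e2 =P _) => [-> H | _]; first by right; right; split => //; lra.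
rewrite mulr0 => /eqP; by rewrite oner_eq0.
Qed.

Lemma sq_nz (R : realType) (T : finType) (g : rel T) (irr : irreflexive g)
  (w1 w2 w3 w4 : T) :
  g w1 w2 -> g w2 w3 -> g w3 w4 -> g w4 w1 -> w1 != w3 -> w2 != w4 ->
  forall (e1 : edge_of g), val e1 = [set w1; w2] -> Fm2 R e1 != 0.
Proof.
move=> g12 g23 g34 g41 n13 n24 e1 E1.
have [k [kk k1 _]] := sq_main R irr g12 g23 g34 g41 n13 n24 E1.
by apply: (Fm2_nz irr kk); rewrite k1 oner_eq0.
Qed.

Lemma pendant_nb (T : finType) (g : rel T) x y z : pendant g x -> g x y -> g x z -> y = z.
Proof.
rewrite /pendant /deg => /cards1P [w Hw] gy gz.
have : y \in [set y | g x y] by rewrite inE.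
have : z \in [set y | g x y] by rewrite inE.
by rewrite Hw !inE => /eqP -> /eqP ->.
Qed.

Lemma pendant_of (T : finType) (g : rel T) x y : g x y -> (forall z, g x z -> z = y) -> pendant g x.
Proof.
move=> gxy H; rewrite /pendant /deg; apply/cards1P; exists y; apply/setP => z.
rewrite !inE; apply/idP/eqP => [/H // | ->] //.
Qed.

Lemma exists_nb (T : finType) (g : rel T) : connectedg g -> (1 < #|T|)%N ->
  forall x, exists y, g x y.
Proof.
move=> conn two x.
have [y] : exists y, y \in [set~ x].
  by apply/set0Pn; rewrite -card_gt0 cardsC1; case: #|T| two => [|[|]].
rewrite !inE => xy.
have /connectP [[|z p] /= pth yl] := conn x y.
  by move: xy; rewrite yl eqxx.
by exists z; case/andP: pth.
Qed.

Lemma K2_card (T : finType) (g : rel T) (sym : symmetric g) (irr : irreflexive g)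
  (conn : connectedg g) a b :
  g a b -> pendant g a -> pendant g b -> #|T| = 2%N.
Proof.
move=> gab pa pb.
have nab := irr_neq irr gab.
have gba : g b a by rewrite sym.
have half : forall x y, g x y -> (x == a) || (x == b) -> (y == a) || (y == b).
  move=> x y gxy /orP [/eqP xa | /eqP xb].
    by rewrite xa in gxy; rewrite (pendant_nb pa gxy gab) eqxx orbT.
  by rewrite xb in gxy; rewrite (pendant_nb pb gxy gba) eqxx.
have cl : closed g (fun z => (z == a) || (z == b)).
  move=> x y gxy; apply/idP/idP; first exact: half.
  by apply: half; rewrite sym.
have all : forall z, (z == a) || (z == b).
  move=> z; have := closed_connect cl (conn a z); rewrite !unfold_in /= eqxx => <- //.
rewrite -cardsT (_ : [set: T] = [set a; b]) ?cards2 ?nab //.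
by apply/setP => z; rewrite !inE all.
Qed.

Definition lift (R : realType) (T1 T : finType) (g1 : rel T1) (G : rel T) (phi : T1 -> T)
  (k1 : edge_of g1 -> R) : edge_of G -> R :=
  ks (index_enum (edge_of g1)) k1 (fun f => phi @: val f).
Arguments lift {R T1 T g1} G phi k1.

Lemma edge_img (T1 T : finType) (g1 : rel T1) (G : rel T) (phi : T1 -> T)
  (hom : forall x y, g1 x y -> G (phi x) (phi y)) (f : edge_of g1) :
  is_edgeb G (phi @: val f).
Proof.
have [x [y [gxy ->]]] := edgeP f.
by rewrite imsetU1 imset_set1; apply: edge_is; apply: hom.
Qed.

Lemma lift_kern (R : realType) (T1 T : finType) (g1 : rel T1) (G : rel T) (phi : T1 -> T)
  (inj : injective phi) (hom : forall x y, g1 x y -> G (phi x) (phi y))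
  (k1 : edge_of g1 -> R) : kern k1 -> kern (lift G phi k1).
Proof.
move=> kk u; rewrite /lift ks_S; last by move=> f _; apply: edge_img.
case: (pickP (fun x => u == phi x)) => [x /eqP -> | nx].
  under eq_bigr do rewrite mem_imset //.
  rewrite -[RHS](kk x) /Sv [RHS]big_mkcond /=; apply: eq_bigr => f _.
  by case: (x \in val f); rewrite ?mulr1 ?mulr0.
apply: big1 => f _; case: imsetP => [[x _ ux] | _]; last by rewrite mulr0.
by move: (nx x); rewrite /= ux eqxx.
Qed.

Lemma lift_at (R : realType) (T1 T : finType) (g1 : rel T1) (G : rel T) (phi : T1 -> T)
  (inj : injective phi) (k1 : edge_of g1 -> R) (e : edge_of G) (f : edge_of g1) :
  val e = phi @: val f -> lift G phi k1 e = k1 f.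
Proof.
move=> E; rewrite /lift /ks E -[RHS](kat_val k1 f); apply: eq_bigr => f' _.
by rewrite (inj_eq (imset_inj inj)) eq_sym.
Qed.

Lemma lift_out (R : realType) (T1 T : finType) (g1 : rel T1) (G : rel T) (phi : T1 -> T)
  (k1 : edge_of g1 -> R) (e : edge_of G) z :
  z \in val e -> (forall x, z != phi x) -> lift G phi k1 e = 0.
Proof.
move=> ze nz; rewrite /lift /ks big1 // => f _.
case: (val e =P _) => [E | _]; last by rewrite mulr0.
by move: ze; rewrite E => /imsetP [x _ zx]; move: (nz x); rewrite zx eqxx.
Qed.

Lemma cartH (T1 T2 : finType) (g1 : rel T1) (g2 : rel T2) a b c :
  g1 a b -> cart_adj g1 g2 (a, c) (b, c).
Proof. by move=> gab; rewrite /cart_adj /= eqxx gab orbT. Qed.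

Lemma cartV (T1 T2 : finType) (g1 : rel T1) (g2 : rel T2) a x y :
  g2 x y -> cart_adj g1 g2 (a, x) (a, y).
Proof. by move=> gxy; rewrite /cart_adj /= eqxx gxy. Qed.

Lemma cart_irr (T1 T2 : finType) (g1 : rel T1) (g2 : rel T2) :
  irreflexive g1 -> irreflexive g2 -> irreflexive (cart_adj g1 g2).
Proof. by move=> i1 i2 [x y]; rewrite /cart_adj /= i1 i2 !andbF. Qed.

Lemma cart_sym (T1 T2 : finType) (g1 : rel T1) (g2 : rel T2) :
  symmetric g1 -> symmetric g2 -> symmetric (cart_adj g1 g2).
Proof. by move=> s1 s2 [x1 x2] [y1 y2]; rewrite /cart_adj /= s1 s2 (eq_sym x1) (eq_sym x2). Qed.

Lemma pneq1 (T1 T2 : finType) (a b : T1) (x y : T2) : a != b -> (a, x) != (b, y).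
Proof. by move=> ab; rewrite xpair_eqE negb_and ab. Qed.

Lemma pneq2 (T1 T2 : finType) (a b : T1) (x y : T2) : x != y -> (a, x) != (b, y).
Proof. by move=> xy; rewrite xpair_eqE negb_and xy orbT. Qed.

Lemma cart_edge (T1 T2 : finType) (g1 : rel T1) (g2 : rel T2) (e : edge_of (cart_adj g1 g2)) :
  (exists a b c, g1 a b /\ val e = [set (a, c); (b, c)]) \/
  (exists a x y, g2 x y /\ val e = [set (a, x); (a, y)]).
Proof.
have [[u1 u2] [[v1 v2] [/orP [/andP [/eqP /= u1v1 g] | /andP [/eqP /= u2v2 g]] ->]]] := edgeP e.
  by right; exists u1, u2, v2; rewrite u1v1.
by left; exists u1, v1, u2; rewrite u2v2.
Qed.

Lemma Qs_sym (R : realType) (T : finType) (g : rel T) (e1 e2 : edge_of g) (s : R) :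
  s * s = 1 -> Qs e1 e2 s -> Qs e2 e1 s.
Proof. by move=> ss Q k kk; rewrite (Q k kk) mulrA ss mul1r. Qed.

Lemma all_nz (R : realType) (T1 T2 : finType) (g1 : rel T1) (g2 : rel T2)
  (sym1 : symmetric g1) (irr1 : irreflexive g1)
  (sym2 : symmetric g2) (irr2 : irreflexive g2)
  (conn1 : connectedg g1) (conn2 : connectedg g2)
  (two1 : (1 < #|T1|)%N) (two2 : (1 < #|T2|)%N)
  (e : edge_of (cart_adj g1 g2)) : Fm2 R e != 0.
Proof.
have irr := cart_irr irr1 irr2.
case: (cart_edge e) => [[a [b [c [gab E]]]] | [a [x [y [gxy E]]]]].
  have [d gcd] := exists_nb conn2 two2 c.
  apply: (@sq_nz R _ (cart_adj g1 g2) irr (a, c) (b, c) (b, d) (a, d) _ _ _ _ _ _ e E).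
  - exact: cartH. - exact: cartV. - by apply: cartH; rewrite sym1.
  - by apply: cartV; rewrite sym2.
  - exact: pneq1 (irr_neq irr1 gab).
  - by apply: pneq1; rewrite eq_sym (irr_neq irr1 gab).
have [b gab] := exists_nb conn1 two1 a.
apply: (@sq_nz R _ (cart_adj g1 g2) irr (a, x) (a, y) (b, y) (b, x) _ _ _ _ _ _ e E).
- exact: cartV. - exact: cartH. - by apply: cartV; rewrite sym2.
- by apply: cartH; rewrite sym1.
- exact: pneq1 (irr_neq irr1 gab).
- exact: pneq1 (irr_neq irr1 gab).
Qed.

Lemma pendH (R : realType) (T1 T2 : finType) (g1 : rel T1) (g2 : rel T2)
  (sym1 : symmetric g1) (irr1 : irreflexive g1)
  (sym2 : symmetric g2) (irr2 : irreflexive g2)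
  (conn2 : connectedg g2) (two2 : (1 < #|T2|)%N)
  (a b : T1) (al : T2) (e1 e2 : edge_of (cart_adj g1 g2)) (s : R) :
  g1 a b -> val e1 = [set (a, al); (b, al)] -> e2 != e1 -> Qs e1 e2 s ->
  pendant g2 al /\ exists be, g2 al be /\
   ((val e2 = [set (b, al); (b, be)] /\ s = -1) \/
    (val e2 = [set (b, be); (a, be)] /\ s = 1) \/
    (val e2 = [set (a, be); (a, al)] /\ s = -1)).
Proof.
move=> gab E1 ne Q.
have irr := cart_irr irr1 irr2.
have nab := irr_neq irr1 gab.
have D : forall be, g2 al be ->
   ((val e2 = [set (b, al); (b, be)] /\ s = -1) \/
    (val e2 = [set (b, be); (a, be)] /\ s = 1) \/
    (val e2 = [set (a, be); (a, al)] /\ s = -1)).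
  move=> be gbe.
  apply: (@sq_Q R _ (cart_adj g1 g2) irr (a, al) (b, al) (b, be) (a, be) _ _ _ _ _ _ e1 e2 s E1 ne Q).
  - exact: cartH. - exact: cartV. - by apply: cartH; rewrite sym1.
  - by apply: cartV; rewrite sym2.
  - exact: pneq1.
  - by apply: pneq1; rewrite eq_sym.
have [be gbe] := exists_nb conn2 two2 al.
split; last by exists be; split => //; apply: D.
apply: (pendant_of gbe) => z gz.
have nbe : be != al by rewrite eq_sym (irr_neq irr2 gbe).
have [x xin] : exists x, (x, be) \in val e2.
  by case: (D be gbe) => [[-> _] | [[-> _] | [-> _]]]; [exists b | exists b | exists a]; rewrite !inE eqxx ?orbT.
case: (D z gz) => [[E _] | [[E _] | [E _]]]; move: xin; rewrite E !inE !xpair_eqE;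
  case/orP => /andP [_ /eqP H] //; by move: nbe; rewrite H eqxx.
Qed.

Lemma pendV (R : realType) (T1 T2 : finType) (g1 : rel T1) (g2 : rel T2)
  (sym1 : symmetric g1) (irr1 : irreflexive g1)
  (sym2 : symmetric g2) (irr2 : irreflexive g2)
  (conn1 : connectedg g1) (two1 : (1 < #|T1|)%N)
  (a : T1) (al be : T2) (e1 e2 : edge_of (cart_adj g1 g2)) (s : R) :
  g2 al be -> val e1 = [set (a, al); (a, be)] -> e2 != e1 -> Qs e1 e2 s ->
  pendant g1 a /\ exists b, g1 a b /\
   ((val e2 = [set (a, be); (b, be)] /\ s = -1) \/
    (val e2 = [set (b, be); (b, al)] /\ s = 1) \/
    (val e2 = [set (b, al); (a, al)] /\ s = -1)).
Proof.
move=> gab E1 ne Q.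
have irr := cart_irr irr1 irr2.
have nab := irr_neq irr2 gab.
have D : forall b, g1 a b ->
   ((val e2 = [set (a, be); (b, be)] /\ s = -1) \/
    (val e2 = [set (b, be); (b, al)] /\ s = 1) \/
    (val e2 = [set (b, al); (a, al)] /\ s = -1)).
  move=> b gb.
  apply: (@sq_Q R _ (cart_adj g1 g2) irr (a, al) (a, be) (b, be) (b, al) _ _ _ _ _ _ e1 e2 s E1 ne Q).
  - exact: cartV. - exact: cartH. - by apply: cartV; rewrite sym2.
  - by apply: cartH; rewrite sym1.
  - exact: pneq1 (irr_neq irr1 gb).
  - exact: pneq1 (irr_neq irr1 gb).
have [b gb] := exists_nb conn1 two1 a.
split; last by exists b; split => //; apply: D.
apply: (pendant_of gb) => z gz.
have nb : b != a by rewrite eq_sym (irr_neq irr1 gb).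
have [x xin] : exists x, (b, x) \in val e2.
  by case: (D b gb) => [[-> _] | [[-> _] | [-> _]]]; [exists be | exists be | exists al]; rewrite !inE eqxx ?orbT.
case: (D z gz) => [[E _] | [[E _] | [E _]]]; move: xin; rewrite E !inE !xpair_eqE;
  case/orP => /andP [/eqP H _] //; by move: nb; rewrite H eqxx.
Qed.

Lemma m2_lift (R : realType) (T1 T : finType) (g1 : rel T1) (G : rel T) (phi : T1 -> T)
  (irr1 : irreflexive g1)
  (inj : injective phi) (hom : forall x y, g1 x y -> G (phi x) (phi y))
  (e1 e2 : edge_of G) (f : edge_of g1) (s : R) z :
  s * s = 1 -> val e1 = phi @: val f -> z \in val e2 -> (forall x, z != phi x) ->
  (Qs e1 e2 s \/ Qs e2 e1 s) -> m2_notin_supp R f.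
Proof.
move=> ss E1 z2 nz Q; apply/(m2P R irr1 f) => k1 kk.
have kl := lift_kern inj hom kk.
have l1 : lift G phi k1 e1 = k1 f by apply: lift_at.
have l2 : lift G phi k1 e2 = 0 by apply: lift_out z2 nz.
case: Q => Q; have := Q _ kl; rewrite l1 l2 ?mulr0 // => H.
by rewrite -[k1 f]mul1r -ss -mulrA -H mulr0.
Qed.

Lemma injH (T1 T2 : finType) (c : T2) : injective (fun x : T1 => (x, c)).
Proof. by move=> x y []. Qed.
Lemma injV (T1 T2 : finType) (a : T1) : injective (fun x : T2 => (a, x)).
Proof. by move=> x y []. Qed.

Lemma imsetH (T1 T2 : finType) (a b : T1) (c : T2) :
  (fun x => (x, c)) @: [set a; b] = [set (a, c); (b, c)].
Proof. by rewrite imsetU1 imset_set1. Qed.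
Lemma imsetV (T1 T2 : finType) (a : T1) (x y : T2) :
  (fun z => (a, z)) @: [set x; y] = [set (a, x); (a, y)].
Proof. by rewrite imsetU1 imset_set1. Qed.

Definition mkedge (T : finType) (g : rel T) x y (H : g x y) : edge_of g :=
  exist _ [set x; y] (edge_is H).

Lemma m2H (R : realType) (T1 T2 : finType) (g1 : rel T1) (g2 : rel T2)
  (irr1 : irreflexive g1) a b c (gab : g1 a b) (e e' : edge_of (cart_adj g1 g2)) (s : R) z :
  s * s = 1 -> val e = [set (a, c); (b, c)] -> z \in val e' -> z.2 != c ->
  (Qs e e' s \/ Qs e' e s) -> m2_notin_supp R (mkedge gab).
Proof.
move=> ss E z2 nz Q.
apply: (@m2_lift R T1 _ g1 (cart_adj g1 g2) (fun x => (x, c)) irr1 (@injH T1 T2 c) _ e e' _ s z ss _ z2 _ Q).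
- by move=> x y gxy; apply: cartH.
- by rewrite E /= imsetH.
- by move=> x; apply: contra nz => /eqP ->.
Qed.

Lemma m2V (R : realType) (T1 T2 : finType) (g1 : rel T1) (g2 : rel T2)
  (irr2 : irreflexive g2) a x y (gxy : g2 x y) (e e' : edge_of (cart_adj g1 g2)) (s : R) z :
  s * s = 1 -> val e = [set (a, x); (a, y)] -> z \in val e' -> z.1 != a ->
  (Qs e e' s \/ Qs e' e s) -> m2_notin_supp R (mkedge gxy).
Proof.
move=> ss E z2 nz Q.
apply: (@m2_lift R T2 _ g2 (cart_adj g1 g2) (fun y => (a, y)) irr2 (@injV T1 T2 a) _ e e' _ s z ss _ z2 _ Q).
- by move=> u v guv; apply: cartV.
- by rewrite E /= imsetV.
- by move=> u; apply: contra nz => /eqP ->.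
Qed.

Ltac side E1 E2 := first [ done | by left | by right | by rewrite /= | by rewrite /= eq_sym
  | by rewrite E1 setUC | by rewrite E2 setUC
  | by rewrite E1 !inE eqxx ?orbT | by rewrite E2 !inE eqxx ?orbT ].

Lemma nec (R : realType) (T1 T2 : finType) (g1 : rel T1) (g2 : rel T2)
  (sym1 : symmetric g1) (irr1 : irreflexive g1)
  (sym2 : symmetric g2) (irr2 : irreflexive g2)
  (conn1 : connectedg g1) (conn2 : connectedg g2)
  (two1 : (1 < #|T1|)%N) (two2 : (1 < #|T2|)%N)
  (e1 e2 : edge_of (cart_adj g1 g2)) (ne12 : e1 != e2) (s : R) :
  s * s = 1 -> Qs e1 e2 s -> case_i_sym R e1 e2 \/ case_ii_sym R e1 e2.
Proof.
move=> ss Q.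
have Q' := Qs_sym ss Q.
have ne21 : e2 != e1 by rewrite eq_sym.
case: (cart_edge e1) => [[a [b [c [gab E1]]]] | [a [x [y [gxy E1]]]]].
- have gba : g1 b a by rewrite sym1.
  have nab := irr_neq irr1 gab.
  have [pc [be [gcb D]]] := pendH sym1 irr1 sym2 irr2 conn2 two2 gab E1 ne21 Q.
  have ncb := irr_neq irr2 gcb.
  case: D => [[E2 _] | [[E2 _] | [E2 _]]].
  + have [pb _] := pendV sym1 irr1 sym2 irr2 conn1 two1 gcb E2 ne12 Q'.
    right; right; left.
    exists b, a, c, be, (mkedge gba), (mkedge gcb); split => //.
    * split.
        by apply: (@m2H R T1 T2 g1 g2 irr1 _ _ c _ e1 e2 s (b, be) ss) => //; side E1 E2.
      by apply: (@m2V R T1 T2 g1 g2 irr2 b _ _ _ e2 e1 s (a, c) ss) => //; side E1 E2.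
    * by split => //; rewrite E1 setUC.
  + have gcb' : g1 b a := gba.
    have E2' : val e2 = [set (b, be); (a, be)] := E2.
    have [pbe _] := pendH sym1 irr1 sym2 irr2 conn2 two2 gba E2' ne12 Q'.
    have K := K2_card sym2 irr2 conn2 gcb pc pbe.
    left; left; split => //.
    exists c, be, a, b, (mkedge gab); split => //.
    * by apply: (@m2H R T1 T2 g1 g2 irr1 _ _ c _ e1 e2 s (b, be) ss) => //; side E1 E2.
    * by rewrite E2 setUC.
  + have E2' : val e2 = [set (a, c); (a, be)] by rewrite E2 setUC.
    have [pa _] := pendV sym1 irr1 sym2 irr2 conn1 two1 gcb E2' ne12 Q'.
    right; right; left.
    exists a, b, c, be, (mkedge gab), (mkedge gcb); split => //.
    * split.
        by apply: (@m2H R T1 T2 g1 g2 irr1 _ _ c _ e1 e2 s (a, be) ss) => //; side E1 E2.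
      by apply: (@m2V R T1 T2 g1 g2 irr2 a _ _ _ e2 e1 s (b, c) ss) => //; side E1 E2.
- have gyx : g2 y x by rewrite sym2.
  have nxy := irr_neq irr2 gxy.
  have [pa [b [gab D]]] := pendV sym1 irr1 sym2 irr2 conn1 two1 gxy E1 ne21 Q.
  have nab := irr_neq irr1 gab.
  case: D => [[E2 _] | [[E2 _] | [E2 _]]].
  + have [py _] := pendH sym1 irr1 sym2 irr2 conn2 two2 gab E2 ne12 Q'.
    right; left.
    have E1' : val e1 = [set (a, y); (a, x)] by rewrite E1 setUC.
    exists a, b, y, x, (mkedge gab), (mkedge gyx); split => //.
    * split.
        by apply: (@m2H R T1 T2 g1 g2 irr1 _ _ y _ e2 e1 s (a, x) ss) => //; side E1 E2.
      by apply: (@m2V R T1 T2 g1 g2 irr2 a _ _ _ e1 e2 s (b, y) ss) => //; side E1 E2.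
  + have [pb _] := pendV sym1 irr1 sym2 irr2 conn1 two1 gyx E2 ne12 Q'.
    have K := K2_card sym1 irr1 conn1 gab pa pb.
    left; right; right; left; split => //.
    exists a, b, x, y, (mkedge gxy); split => //.
    * by apply: (@m2V R T1 T2 g1 g2 irr2 a _ _ _ e1 e2 s (b, y) ss) => //; side E1 E2.
    * by rewrite E2 setUC.
  + have E2' : val e2 = [set (a, x); (b, x)] by rewrite E2 setUC.
    have [px _] := pendH sym1 irr1 sym2 irr2 conn2 two2 gab E2' ne12 Q'.
    right; left.
    exists a, b, x, y, (mkedge gab), (mkedge gxy); split => //.
    * split.
        by apply: (@m2H R T1 T2 g1 g2 irr1 _ _ x _ e2 e1 s (a, y) ss) => //; side E1 E2.
      by apply: (@m2V R T1 T2 g1 g2 irr2 a _ _ _ e1 e2 s (b, x) ss) => //; side E1 E2.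
Qed.

Lemma deg2 (R : realType) (T : finType) (g : rel T) (e1 e2 : edge_of g) w :
  e1 != e2 -> w \in val e1 -> w \in val e2 ->
  (forall f : edge_of g, w \in val f -> f = e1 \/ f = e2) -> Qs e1 e2 (-1 : R).
Proof.
move=> ne w1 w2 H k kk.
have := kk w; rewrite /Sv (bigD1 e1) // (bigD1 e2) /=; last by rewrite w2 eq_sym ne.
rewrite big1 ?addr0; last first.
  move=> f /andP [/andP [wf nf1] nf2]; case: (H f wf) => E; by move: nf1 nf2; rewrite E eqxx ?andbF.
by move/eqP; rewrite addr_eq0 mulN1r => /eqP.
Qed.

Lemma nbr (T : finType) (g : rel T) (sym : symmetric g) (f : edge_of g) w :
  w \in val f -> exists z, g w z /\ val f = [set w; z].
Proof.
have [x [y [gxy E]]] := edgeP f.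
rewrite E !inE => /orP [/eqP -> | /eqP ->]; first by exists y.
by exists x; rewrite sym setUC.
Qed.

Lemma edge2 (T : finType) (g : rel T) (sym : symmetric g) (irr : irreflexive g)
  (f : edge_of g) a b : val f = [set a; b] -> g a b.
Proof.
move=> F.
have ab : a != b.
  apply/eqP => ab; have := edge_card irr f; rewrite F ab setUid cards1 //.
have [x [y [gxy E]]] := edgeP f.
have xy := irr_neq irr gxy.
have : a \in [set x; y] by rewrite -E F !inE eqxx.
have : b \in [set x; y] by rewrite -E F !inE eqxx orbT.
rewrite !inE => /orP [/eqP bx | /eqP by_] /orP [/eqP ax | /eqP ay].
- by move: ab; rewrite ax bx eqxx.
- by rewrite ay bx sym.
- by rewrite ax by_.
- by move: ab; rewrite ay by_ eqxx.
Qed.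

Lemma suff_ii (R : realType) (T1 T2 : finType) (g1 : rel T1) (g2 : rel T2)
  (sym1 : symmetric g1) (irr1 : irreflexive g1)
  (sym2 : symmetric g2) (irr2 : irreflexive g2)
  (e1 e2 : edge_of (cart_adj g1 g2)) :
  case_ii R e1 e2 -> Qs e1 e2 (-1 : R).
Proof.
case=> [a [b [al [be [f1 [f2 [[pa pal] F1 F2 _ [E1 E2]]]]]]]].
have gab := edge2 sym1 irr1 F1; have gab2 := edge2 sym2 irr2 F2.
have nab := irr_neq irr1 gab; have nab2 := irr_neq irr2 gab2.
apply: (deg2 (w := (a, al))).
- apply/eqP => E; have : (a, be) \in val e2 by rewrite -E E1 !inE eqxx orbT.
  by rewrite E2 !inE !xpair_eqE eqxx (eq_sym be) (negbTE nab2) (negbTE nab).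
- by rewrite E1 !inE eqxx.
- by rewrite E2 !inE eqxx.
move=> f wf; have [[z1 z2] [gz Ef]] := nbr (cart_sym sym1 sym2) wf.
case/orP: gz => /andP [/eqP /= H1 H2].
  left; apply: val_inj; rewrite Ef E1 -H1 (pendant_nb pal H2 gab2) //.
right; apply: val_inj; rewrite Ef E2 -H1 (pendant_nb pa H2 gab) //.
Qed.

Lemma suff_ii' (R : realType) (T1 T2 : finType) (g1 : rel T1) (g2 : rel T2)
  (sym1 : symmetric g1) (irr1 : irreflexive g1)
  (sym2 : symmetric g2) (irr2 : irreflexive g2)
  (e1 e2 : edge_of (cart_adj g1 g2)) :
  case_ii' R e1 e2 -> Qs e1 e2 (-1 : R).
Proof.
case=> [a [b [al [be [f1 [f2 [[pa pal] F1 F2 _ [E1 E2]]]]]]]].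
have gab := edge2 sym2 irr2 F1; have gab2 := edge2 sym1 irr1 F2.
have nab := irr_neq irr2 gab; have nab2 := irr_neq irr1 gab2.
apply: (deg2 (w := (al, a))).
- apply/eqP => E; have : (be, a) \in val e2 by rewrite -E E1 !inE eqxx orbT.
  by rewrite E2 !inE !xpair_eqE eqxx (eq_sym be) (negbTE nab2) (negbTE nab).
- by rewrite E1 !inE eqxx.
- by rewrite E2 !inE eqxx.
move=> f wf; have [[z1 z2] [gz Ef]] := nbr (cart_sym sym1 sym2) wf.
case/orP: gz => /andP [/eqP /= H1 H2].
  right; apply: val_inj; rewrite Ef E2 -H1 (pendant_nb pa H2 gab) //.
left; apply: val_inj; rewrite Ef E1 -H1 (pendant_nb pal H2 gab2) //.
Qed.


Lemma twoemb (R : realType) (T1 T : finType) (g1 : rel T1) (G : rel T) (irr1 : irreflexive g1)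
  (pp pq : T1 -> T) (f : edge_of g1) :
  m2_notin_supp R f ->
  (forall (e : edge_of G) x,
     \sum_(f1 : edge_of g1 | x \in val f1)
        (((val e == pp @: val f1)%:R : R) - (val e == pq @: val f1)%:R)
     = (pp x \in val e)%:R - (pq x \in val e)%:R) ->
  forall e1 e2 : edge_of G, val e1 = pp @: val f -> val e2 = pq @: val f -> Qs e1 e2 (1 : R).
Proof.
move=> m2 PE e1 e2 E1 E2 k kk.
pose k1 (f1 : edge_of g1) : R :=
  \sum_(e : edge_of G) k e * ((val e == pp @: val f1)%:R - (val e == pq @: val f1)%:R).
have kk1 : kern k1.
  move=> x; rewrite /Sv /k1 exchange_big /=.
  under eq_bigr do rewrite -mulr_sumr PE mulrBr.
  rewrite sumrB -[RHS](subrr 0); congr (_ - _).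
    rewrite -[RHS](kk (pp x)) /Sv [RHS]big_mkcond /=; apply: eq_bigr => e _.
    by case: (_ \in _); rewrite ?mulr1 ?mulr0.
  rewrite -[RHS](kk (pq x)) /Sv [RHS]big_mkcond /=; apply: eq_bigr => e _.
  by case: (_ \in _); rewrite ?mulr1 ?mulr0.
have := proj1 (m2P R irr1 f) m2 k1 kk1.
rewrite /k1 -E1 -E2; under eq_bigr do rewrite mulrBr.
rewrite sumrB !kat_val => /eqP; rewrite subr_eq0 mul1r => /eqP //.
Qed.

Lemma cnt_at (R : realType) (T1 T : finType) (g1 : rel T1) (phi : T1 -> T) (inj : injective phi)
  (S : {set T}) (f0 : edge_of g1) x : S = phi @: val f0 ->
  \sum_(f1 : edge_of g1 | x \in val f1) ((S == phi @: val f1)%:R : R) = (phi x \in S)%:R.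
Proof.
move=> ->; under eq_bigr do rewrite (inj_eq (imset_inj inj)) eq_sym.
by rewrite one_edge ?(valP f0) // mem_imset.
Qed.

Lemma cnt_out (R : realType) (T1 T : finType) (g1 : rel T1) (phi : T1 -> T)
  (S : {set T}) z x : z \in S -> (forall y, z != phi y) ->
  \sum_(f1 : edge_of g1 | x \in val f1) ((S == phi @: val f1)%:R : R) = 0.
Proof.
move=> zS nz; apply: big1 => f1 _; case: eqP => // E.
by move: zS; rewrite E => /imsetP [y _ zy]; move: (nz y); rewrite zy eqxx.
Qed.

Lemma all2 (T : finType) (p q : T) : p != q -> #|T| = 2%N -> forall y, (y == p) || (y == q).
Proof.
move=> pq c y.
have : [set p; q] = [set: T] by apply/eqP; rewrite eqEcard subsetT cardsT cards2 pq c.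
by move/setP/(_ y); rewrite !inE.
Qed.

Lemma suff_i (R : realType) (T1 T2 : finType) (g1 : rel T1) (g2 : rel T2)
  (sym1 : symmetric g1) (irr1 : irreflexive g1)
  (sym2 : symmetric g2) (irr2 : irreflexive g2)
  (e1 e2 : edge_of (cart_adj g1 g2)) :
  case_i R e1 e2 -> Qs e1 e2 (1 : R).
Proof.
case=> c2 [p [q [a [b [f [pq F m2 E1 E2]]]]]].
have A2 := all2 pq c2.
apply: (twoemb (pp := fun x => (x, p)) (pq := fun x => (x, q)) irr1 m2); last first.
- by rewrite E2 F imsetH.
- by rewrite E1 F imsetH.
move=> e x; rewrite sumrB.
case: (cart_edge e) => [[u [v [c [guv E]]]] | [u [y1 [y2 [gy E]]]]].
- have Ei : forall d, c = d -> val e = (fun x => (x, d)) @: val (mkedge guv) by move=> d <-; rewrite E imsetH.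
  case/orP: (A2 c) => /eqP cd; have Ee := Ei _ cd; rewrite cd in E.
    rewrite (cnt_at _ (@injH T1 T2 p) _ Ee).
    rewrite (@cnt_out R T1 _ g1 (fun x => (x, q)) _ (u, p) x) ?E ?inE ?eqxx //; last by move=> y; apply: pneq2.
    by rewrite !xpair_eqE eqxx (eq_sym q p) (negbTE pq) !andbF subr0.
  rewrite (cnt_at _ (@injH T1 T2 q) _ Ee).
  rewrite (@cnt_out R T1 _ g1 (fun x => (x, p)) _ (u, q) x) ?E ?inE ?eqxx //; last by move=> y; apply: pneq2; rewrite eq_sym.
  by rewrite !xpair_eqE eqxx (negbTE pq) !andbF.
- have ny := irr_neq irr2 gy.
  have E' : val e = [set (u, p); (u, q)].
    rewrite E; case/orP: (A2 y1) => /eqP y1p; case/orP: (A2 y2) => /eqP y2p;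
      by move: ny; rewrite y1p y2p ?eqxx // => _; rewrite setUC.
  rewrite (@cnt_out R T1 _ g1 (fun x => (x, p)) _ (u, q) x) ?E' ?inE ?eqxx ?orbT //; last by move=> y; apply: pneq2; rewrite eq_sym.
  rewrite (@cnt_out R T1 _ g1 (fun x => (x, q)) _ (u, p) x) ?E' ?inE ?eqxx ?orbT //; last by move=> y; apply: pneq2.
  rewrite !xpair_eqE !eqxx (eq_sym q p) (negbTE pq) !andbT !andbF orbF.
  by rewrite /= !subrr.
Qed.

Lemma suff_i' (R : realType) (T1 T2 : finType) (g1 : rel T1) (g2 : rel T2)
  (sym1 : symmetric g1) (irr1 : irreflexive g1)
  (sym2 : symmetric g2) (irr2 : irreflexive g2)
  (e1 e2 : edge_of (cart_adj g1 g2)) :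
  case_i' R e1 e2 -> Qs e1 e2 (1 : R).
Proof.
case=> c2 [p [q [a [b [f [pq F m2 E1 E2]]]]]].
have A2 := all2 pq c2.
apply: (twoemb (pp := fun x => (p, x)) (pq := fun x => (q, x)) irr2 m2); last first.
- by rewrite E2 F imsetV.
- by rewrite E1 F imsetV.
move=> e x; rewrite sumrB.
case: (cart_edge e) => [[u [v [c [guv E]]]] | [u [y1 [y2 [gy E]]]]].
- have ny := irr_neq irr1 guv.
  have E' : val e = [set (p, c); (q, c)].
    rewrite E; case/orP: (A2 u) => /eqP y1p; case/orP: (A2 v) => /eqP y2p;
      by move: ny; rewrite y1p y2p ?eqxx // => _; rewrite setUC.
  rewrite (@cnt_out R T2 _ g2 (fun x => (p, x)) _ (q, c) x) ?E' ?inE ?eqxx ?orbT //; last by move=> y; apply: pneq1; rewrite eq_sym.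
  rewrite (@cnt_out R T2 _ g2 (fun x => (q, x)) _ (p, c) x) ?E' ?inE ?eqxx ?orbT //; last by move=> y; apply: pneq1.
  rewrite !xpair_eqE !eqxx (eq_sym q p) (negbTE pq) ?andbT ?andbF ?orbF.
  by rewrite /= !subrr.
- have Ei : forall d, u = d -> val e = (fun x => (d, x)) @: val (mkedge gy) by move=> d <-; rewrite E imsetV.
  case/orP: (A2 u) => /eqP cd; have Ee := Ei _ cd; rewrite cd in E.
    rewrite (cnt_at _ (@injV T1 T2 p) _ Ee).
    rewrite (@cnt_out R T2 _ g2 (fun x => (q, x)) _ (p, y1) x) ?E ?inE ?eqxx //; last by move=> y; apply: pneq1.
    by rewrite !xpair_eqE eqxx (eq_sym q p) (negbTE pq) /= subr0.
  rewrite (cnt_at _ (@injV T1 T2 q) _ Ee).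
  rewrite (@cnt_out R T2 _ g2 (fun x => (p, x)) _ (q, y1) x) ?E ?inE ?eqxx //; last by move=> y; apply: pneq1; rewrite eq_sym.
  by rewrite !xpair_eqE eqxx (negbTE pq) /=.
Qed.


Unset Implicit Arguments.
Set Strict Implicit.
Set Printing Implicit Defensive.

Theorem mainTheorem17 (R : realType) (T1 T2 : finType) (g1 : rel T1) (g2 : rel T2)
  (sym1 : symmetric g1) (irr1 : irreflexive g1)
  (sym2 : symmetric g2) (irr2 : irreflexive g2)
  (conn1 : connectedg g1) (conn2 : connectedg g2)
  (two1 : (1 < #|T1|)%N) (two2 : (1 < #|T2|)%N)
  (e1 e2 : edge_of (cart_adj g1 g2)) (ne12 : e1 != e2) :
  [/\ (Fm2 R e1 = Fm2 R e2 \/ Fm2 R e1 = - Fm2 R e2)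
        <-> (case_i_sym R e1 e2 \/ case_ii_sym R e1 e2),
      case_i_sym R e1 e2 -> Fm2 R e1 = Fm2 R e2 /\ Fm2 R e1 != 0 &
      case_ii_sym R e1 e2 -> Fm2 R e1 = - Fm2 R e2 /\ Fm2 R e1 != 0].
Proof.
have irr := cart_irr irr1 irr2.
have Fp : Fm2 R e1 = Fm2 R e2 <-> Qs e1 e2 (1 : R).
  have := Fm2_rel irr e1 e2 (1 : R); rewrite scale1r; exact.
have Fn : Fm2 R e1 = - Fm2 R e2 <-> Qs e1 e2 (-1 : R).
  have := Fm2_rel irr e1 e2 (-1 : R); rewrite scaleN1r; exact.
have s1 : (1 : R) * 1 = 1 by rewrite mulr1.
have sn : (-1 : R) * -1 = 1 by rewrite mulrNN mulr1.
have nz := all_nz R sym1 irr1 sym2 irr2 conn1 conn2 two1 two2 e1.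
have Qi : case_i_sym R e1 e2 -> Qs e1 e2 (1 : R).
  case=> [H | [H | [H | H]]].
  - exact (suff_i sym1 irr1 sym2 irr2 H).
  - exact (Qs_sym s1 (suff_i sym1 irr1 sym2 irr2 H)).
  - exact (suff_i' sym1 irr1 sym2 irr2 H).
  - exact (Qs_sym s1 (suff_i' sym1 irr1 sym2 irr2 H)).
have Qii : case_ii_sym R e1 e2 -> Qs e1 e2 (-1 : R).
  case=> [H | [H | [H | H]]].
  - exact (suff_ii sym1 irr1 sym2 irr2 H).
  - exact (Qs_sym sn (suff_ii sym1 irr1 sym2 irr2 H)).
  - exact (suff_ii' sym1 irr1 sym2 irr2 H).
  - exact (Qs_sym sn (suff_ii' sym1 irr1 sym2 irr2 H)).
split.
- split.
    case=> [/Fp Q | /Fn Q].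
      exact (nec sym1 irr1 sym2 irr2 conn1 conn2 two1 two2 ne12 s1 Q).
    exact (nec sym1 irr1 sym2 irr2 conn1 conn2 two1 two2 ne12 sn Q).
  case=> [H | H]; [left; apply/Fp | right; apply/Fn]; by [apply: Qi | apply: Qii].
- by move=> H; split => //; apply/Fp; apply: Qi.
- by move=> H; split => //; apply/Fn; apply: Qii.
Qed.
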